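(* Let $g$ be a function on $[-\pi,\pi]$ of the form $$g(\lambda)=h(\lambda)\,|\lambda-\lambda_1|^{\alpha(1)}\cdots|\lambda-\lambda_r|^{\alpha(r)},$$ where $r\in\mathbb{N}$, $\lambda_1,\dots,\lambda_r\in[-\pi,\pi]$, $\alpha(1),\dots,\alpha(r)\ge0$, and $h$ is a nonnegative measurable function, integrable over $[-\pi,\pi]$, continuous at $\lambda=0$, with a positive lower bound. Then for every $\epsilon>0$ there exists a trigonometric polynomial $t(\lambda)$ such that $0\le t(\lambda)\le g(\lambda)$ for all $\lambda\in[-\pi,\pi]$ and $t(0)\ge g(0)-\epsilon$. *)

(* Defs.v *)
From HB Require Import structures.
From mathcomp Require Import all_boot all_order all_algebra.
From mathcomp Require Import all_classical all_reals all_analysis.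
Set Implicit Arguments. Unset Strict Implicit. Unset Printing Implicit Defensive.
Import Order.TTheory GRing.Theory Num.Theory.
Import numFieldNormedType.Exports.
Local Open Scope ring_scope.
Local Open Scope classical_set_scope.

Definition trig_poly (R : realType) (t : R -> R) : Prop :=
  exists (n : nat) (a b : nat -> R),
    forall x : R, t x = \sum_(k < n.+1) (a k * cos (k%:R * x) + b k * sin (k%:R * x)).

(* g(λ) = h(λ) |λ-λ_1|^{α(1)} ... |λ-λ_r|^{α(r)}  (with 0^0 = 1, MathComp powR). *)
Definition fisher_hartwig (R : realType) (h : R -> R) (r : nat)
  (lam alpha : 'I_r -> R) (x : R) : R :=
  h x * \prod_(j < r) (`|x - lam j| `^ alpha j).

(* Main.v *)
Require Import Defs.
From HB Require Import structures.
From mathcomp Require Import all_boot all_order all_algebra.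
From mathcomp Require Import all_classical all_reals all_analysis.
From mathcomp Require Import ring lra.
Import Order.TTheory GRing.Theory Num.Theory.
Import numFieldNormedType.Exports.
Local Open Scope ring_scope.
Local Open Scope classical_set_scope.
Section TP.
Variable R : realType.
Implicit Types (f g : R -> R) (c : R).

Lemma tp_ext f g : trig_poly f -> (forall x, f x = g x) -> trig_poly g.
Proof. move=> [n [a [b H]]] fg; exists n, a, b => x; by rewrite -fg. Qed.
Arguments tp_ext {f g}.

Lemma tp_mono (a b : R) (m : nat) :
  trig_poly (fun x : R => a * cos (m%:R * x) + b * sin (m%:R * x)).
Proof.
exists m, (fun k => if k == m then a else 0), (fun k => if k == m then b else 0).
move=> x; rewrite big_ord_recr /= eqxx big1 ?add0r // => i _.
by rewrite (ltn_eqF (ltn_ord i)) !mul0r addr0.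
Qed.

Lemma tp_add f g : trig_poly f -> trig_poly g -> trig_poly (fun x : R => f x + g x).
Proof.
move=> [n1 [a1 [b1 H1]]] [n2 [a2 [b2 H2]]].
exists (n1 + n2)%N, (fun k => (if (k < n1.+1)%N then a1 k else 0) + (if (k < n2.+1)%N then a2 k else 0)),
  (fun k => (if (k < n1.+1)%N then b1 k else 0) + (if (k < n2.+1)%N then b2 k else 0)).
move=> x; rewrite H1 H2.
rewrite (big_ord_widen (n1 + n2).+1 (fun k => a1 k * cos (k%:R * x) + b1 k * sin (k%:R * x))); last by rewrite ltnS leq_addr.
rewrite (big_ord_widen (n1 + n2).+1 (fun k => a2 k * cos (k%:R * x) + b2 k * sin (k%:R * x))); last by rewrite ltnS leq_addl.
rewrite !(big_mkcond (fun i : 'I_ _ => (i < _)%N)) -big_split /=.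
apply: eq_bigr => i _.
case: ifP => _; case: ifP => _; rewrite ?mul0r ?add0r ?addr0 ?mulrDl //; ring.
Qed.
Arguments tp_add {f g}.

Lemma tp_scale c f : trig_poly f -> trig_poly (fun x : R => c * f x).
Proof.
move=> [n [a [b H]]]; exists n, (fun k => c * a k), (fun k => c * b k) => x.
rewrite H mulr_sumr; apply: eq_bigr => i _; ring.
Qed.
Arguments tp_scale c {f}.

Lemma tp_const c : trig_poly (fun _ => c).
Proof.
apply: (tp_ext (tp_mono c 0 0)) => x; by rewrite mul0r cos0 sin0 mulr1 mulr0 addr0.
Qed.

Lemma tp_sum n (F : nat -> R -> R) : (forall k, trig_poly (F k)) ->
  trig_poly (fun x : R => \sum_(k < n) F k x).
Proof.
move=> HF; elim: n => [|n IH].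
  by apply: (tp_ext (tp_const 0)) => x; rewrite big_ord0.
by apply: (tp_ext (tp_add IH (HF n))) => x; rewrite big_ord_recr.
Qed.

Lemma tp_cos1 (k : nat) : trig_poly (fun x : R => cos x * cos (k%:R * x)).
Proof.
case: k => [|k].
  by apply: (tp_ext (tp_mono 1 0 1)) => x; rewrite ?mulr0n ?mulr1n !mul0r cos0 ?sin0 !mul1r ?mulr1 ?mulr0 ?addr0 ?add0r.
apply: (tp_ext (tp_add (tp_mono (2^-1) 0 k.+2) (tp_mono (2^-1) 0 k))) => x.
have -> : k.+2%:R * x = k.+1%:R * x + x by rewrite !mulrS; ring.
have -> : k%:R * x = k.+1%:R * x - x by rewrite !mulrS; ring.
rewrite cosD cosB; by field.
Qed.

Lemma tp_sin1 (k : nat) : trig_poly (fun x : R => cos x * sin (k%:R * x)).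
Proof.
case: k => [|k].
  by apply: (tp_ext (tp_const 0)) => x; rewrite ?mulr0n mul0r sin0 mulr0.
apply: (tp_ext (tp_add (tp_mono 0 (2^-1) k.+2) (tp_mono 0 (2^-1) k))) => x.
have -> : k.+2%:R * x = k.+1%:R * x + x by rewrite !mulrS; ring.
have -> : k%:R * x = k.+1%:R * x - x by rewrite !mulrS; ring.
rewrite sinD sinB; by field.
Qed.

Lemma tp_cos2 (k : nat) : trig_poly (fun x : R => sin x * cos (k%:R * x)).
Proof.
case: k => [|k].
  by apply: (tp_ext (tp_mono 0 1 1)) => x; rewrite ?mulr0n ?mulr1n !mul0r cos0 ?sin0 !mul1r ?mulr1 ?mulr0 ?addr0 ?add0r.
apply: (tp_ext (tp_add (tp_mono 0 (2^-1) k.+2) (tp_mono 0 (- 2^-1) k))) => x.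
have -> : k.+2%:R * x = k.+1%:R * x + x by rewrite !mulrS; ring.
have -> : k%:R * x = k.+1%:R * x - x by rewrite !mulrS; ring.
rewrite sinD sinB; by field.
Qed.

Lemma tp_sin2 (k : nat) : trig_poly (fun x : R => sin x * sin (k%:R * x)).
Proof.
case: k => [|k].
  by apply: (tp_ext (tp_const 0)) => x; rewrite ?mulr0n mul0r sin0 mulr0.
apply: (tp_ext (tp_add (tp_mono (- 2^-1) 0 k.+2) (tp_mono (2^-1) 0 k))) => x.
have -> : k.+2%:R * x = k.+1%:R * x + x by rewrite !mulrS; ring.
have -> : k%:R * x = k.+1%:R * x - x by rewrite !mulrS; ring.
rewrite cosD cosB; by field.
Qed.

Lemma tp_mulcos f : trig_poly f -> trig_poly (fun x : R => cos x * f x).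
Proof.
move=> [n [a [b H]]].
apply: (tp_ext (tp_sum n.+1 (fun k (x : R) => a k * (cos x * cos (k%:R * x)) + b k * (cos x * sin (k%:R * x)))
   (fun k => tp_add (tp_scale (a k) (tp_cos1 k)) (tp_scale (b k) (tp_sin1 k))))) => x.
rewrite H mulr_sumr; apply: eq_bigr => i _; ring.
Qed.
Arguments tp_mulcos {f}.

Lemma tp_mulsin f : trig_poly f -> trig_poly (fun x : R => sin x * f x).
Proof.
move=> [n [a [b H]]].
apply: (tp_ext (tp_sum n.+1 (fun k (x : R) => a k * (sin x * cos (k%:R * x)) + b k * (sin x * sin (k%:R * x)))
   (fun k => tp_add (tp_scale (a k) (tp_cos2 k)) (tp_scale (b k) (tp_sin2 k))))) => x.
rewrite H mulr_sumr; apply: eq_bigr => i _; ring.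
Qed.
Arguments tp_mulsin {f}.

Definition Kf (x : R) : R := (1 + cos x) / 2.
Definition Sf (l x : R) : R := (1 - cos (x - l)) / 2.

Lemma tp_mulK f : trig_poly f -> trig_poly (fun x : R => Kf x * f x).
Proof.
move=> Hf; apply: (tp_ext (tp_add (tp_scale (2^-1) Hf) (tp_scale (2^-1) (tp_mulcos Hf)))) => x.
rewrite /Kf; ring.
Qed.
Arguments tp_mulK {f}.

Lemma tp_mulS l f : trig_poly f -> trig_poly (fun x : R => Sf l x * f x).
Proof.
move=> Hf.
apply: (tp_ext (tp_add (tp_scale (2^-1) Hf) (tp_add (tp_scale (- cos l / 2) (tp_mulcos Hf))
   (tp_scale (- sin l / 2) (tp_mulsin Hf))))) => x.
rewrite /Sf cosB; ring.
Qed.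
Arguments tp_mulS l {f}.

Lemma tp_mulSn l m f : trig_poly f -> trig_poly (fun x : R => Sf l x ^+ m * f x).
Proof.
move=> Hf; elim: m => [|m IH]; first by apply: (tp_ext Hf) => x; rewrite expr0 mul1r.
by apply: (tp_ext (tp_mulS l IH)) => x; rewrite exprS mulrA.
Qed.
Arguments tp_mulSn l m {f}.

Lemma tp_Kn N : trig_poly (fun x : R => Kf x ^+ N).
Proof.
elim: N => [|N IH]; first by apply: (tp_ext (tp_const 1)) => x; rewrite expr0.
by apply: (tp_ext (tp_mulK IH)) => x; rewrite exprS.
Qed.

Lemma tp_final (I : eqType) (s : seq I) (lam : I -> R) (m : I -> nat) N A :
  trig_poly (fun x : R => A * (Kf x ^+ N * \prod_(j <- s) Sf (lam j) x ^+ m j)).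
Proof.
apply: tp_scale.
elim: s => [|j s IH]; first by apply: (tp_ext (tp_Kn N)) => x; rewrite big_nil mulr1.
apply: (tp_ext (tp_mulSn (lam j) (m j) IH)) => x.
rewrite big_cons; ring.
Qed.
End TP.
Section AN.
Variable R : realType.

Lemma abs_sin_le (v : R) : `|sin v| <= `|v|.
Proof.
have key : forall w : R, 0 < w -> `|sin w| <= w.
  move=> w w0.
  have [c _ Hc] := @MVT R sin cos 0 w w0 (fun x _ => is_derive_sin x)
     (continuous_subspaceT (@continuous_sin R)).
  move: Hc; rewrite sin0 subr0 subr0 => ->.
  by rewrite normrM (gtr0_norm w0) -[X in _ <= X]mul1r ler_wpM2r ?(ltW w0) ?cos_max.
have [v0|v0|->] := ltgtP v 0; last by rewrite sin0 normr0.
- by move: (key (- v)); rewrite oppr_gt0 sinN normrN (ltr0_norm v0); apply.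
- by rewrite (gtr0_norm v0) key.
Qed.

Lemma one_cos (u : R) : (1 - cos u) / 2 = sin (u / 2) ^+ 2.
Proof.
have e : cos u = cos ((u / 2) *+ 2) by congr cos; rewrite -mulr_natr mulfVK // pnatr_eq0.
rewrite e cos_mulr2n cos2sin2; by field.
Qed.

Lemma key_bound (l x a : R) (m : nat) : 0 <= a -> a <= m%:R ->
  ((1 - cos (x - l)) / 2) ^+ m <= `|x - l| `^ a.
Proof.
move=> a0 am.
case: m am => [|m] am.
  have -> : a = 0 by apply/eqP; rewrite eq_le a0 andbT.
  by rewrite expr0 powRr0.
rewrite one_cos -exprM.
set w := sin ((x - l) / 2).
have [w0|w0] := eqVneq w 0.
  by rewrite w0 expr0n /= powR_ge0.
have -> : w ^+ (2 * m.+1) = `|w| ^+ (2 * m.+1).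
  by rewrite (exprM w) (exprM `|w|) real_normK // num_real.
have wpos : 0 < `|w| by rewrite normr_gt0.
have w1 : `|w| <= 1 by apply: sin_max.
rewrite -powR_mulrn //.
apply: (@le_trans _ _ (`|w| `^ a)).
  apply: ger_powR; first by rewrite wpos w1.
  by apply: (le_trans am); rewrite ler_nat leq_pmull.
apply: ge0_ler_powR => //; rewrite ?nnegrE //.
apply: (le_trans (abs_sin_le _)).
by rewrite normrM -[X in _ <= X]mulr1 ler_wpM2l // normfV normr_nat invf_le1 ?ler1n.
Qed.
End AN.
Section CT.
Variable R : realType.

Lemma cont_powR (a p : R) : 0 < a -> (y `^ p @[y --> a] --> a `^ p).
Proof.
move=> a0.
have Heq : {near a, (fun y => expR (p * ln y)) =1 (fun y => y `^ p)}.
  near=> y; rewrite /powR gt_eqF //; near: y.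
  exact: lt_nbhsr.
apply: cvg_trans (near_eq_cvg Heq) _.
rewrite /powR gt_eqF //.
have h1 : (p * ln y) @[y --> a] --> p * ln a.
  apply: cvgM; first exact: cvg_cst.
  exact: continuous_ln.
exact: (continuous_comp h1 (@continuous_expR R _)).
Unshelve. all: by end_near. Qed.

Lemma cont_prod (I : Type) (s : seq I) (F : I -> R -> R) (x0 : R) :
  (forall i, F i x @[x --> x0] --> F i x0) ->
  (\prod_(i <- s) F i x) @[x --> x0] --> \prod_(i <- s) F i x0.
Proof.
move=> HF; elim: s => [|i s IH].
  under eq_fun do rewrite big_nil.
  rewrite big_nil; exact: cvg_cst.
under eq_fun do rewrite big_cons.
rewrite big_cons; exact: cvgM.
Qed.

Lemma cont_pow_shift (l p : R) : l != 0 ->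
  `|x - l| `^ p @[x --> (0:R)] --> `|0 - l| `^ p.
Proof.
move=> l0.
have h1 : `|x - l| @[x --> (0:R)] --> `|0 - l|.
  apply: cvg_norm; apply: cvgB; [exact: cvg_id | exact: cvg_cst].
have h2 : y `^ p @[y --> `|0 - l|] --> `|0 - l| `^ p.
  by apply: cont_powR; rewrite sub0r normrN normr_gt0.
exact: (continuous_comp h1 h2).
Qed.

Lemma near0 (P : R -> Prop) : (\forall x \near (0:R), P x) -> exists2 d : R, 0 < d & forall x, `|x| < d -> P x.
Proof.
move/nbhs_normP => [d /= d0 Hd]; exists d => // x xd; apply: Hd => /=.
by rewrite sub0r normrN.
Qed.
End CT.
Arguments Kf {R}.
Arguments Sf {R}.

Section CB.
Variable R : realType.

Lemma cos_le_far (d x : R) : 0 <= d -> d <= `|x| -> `|x| <= pi -> cos x <= cos d.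
Proof.
move=> d0 dx xpi; rewrite -cos_norm.
move: dx; rewrite le_eqVlt => /predU1P[->//|dx].
apply: ltW; rewrite ltr_cos // in_itv /= ?d0 ?xpi ?normr_ge0 //.
by rewrite (le_trans (ltW dx)).
Qed.

Lemma cos_lt1 (l : R) : l \in `[- pi, pi] -> l != 0 -> cos l < 1.
Proof.
move=> li l0; rewrite -cos_norm -cos0 ltr_cos ?normr_gt0 // in_itv /= ?lexx ?pi_ge0 ?normr_ge0 //.
rewrite /= ler_norml. by move: li; rewrite in_setE /= in_itv.
Qed.
End CB.
Section CT2.
Variable R : realType.
Lemma cont_exp (f : R -> R) (x0 : R) (n : nat) :
  f x @[x --> x0] --> f x0 -> f x ^+ n @[x --> x0] --> f x0 ^+ n.
Proof.
move=> Hf; elim: n => [|n IH].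
  under eq_fun do rewrite expr0.
  rewrite expr0; exact: cvg_cst.
under eq_fun do rewrite exprS.
rewrite exprS; exact: cvgM.
Qed.

Lemma cont_Sf (l x0 : R) : Sf l x @[x --> x0] --> Sf l x0.
Proof.
rewrite /Sf; apply: cvgM; last exact: cvg_cst.
apply: cvgB; first exact: cvg_cst.
have h1 : (x - l) @[x --> x0] --> x0 - l by apply: cvgB; [exact: cvg_id | exact: cvg_cst].
exact: (continuous_comp h1 (@continuous_cos R _)).
Qed.
End CT2.
Theorem lemma5p5 (R : realType) (h : R -> R) (r : nat) (lam alpha : 'I_r -> R)
  (Hlam : forall j, lam j \in `[- pi, pi])
  (Halpha : forall j, 0 <= alpha j)
  (Hh_nonneg : forall x, x \in `[- pi, pi] -> 0 <= h x)
  (Hh_meas : measurable_fun `[- pi, pi] h)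
  (Hh_int : (@lebesgue_measure R).-integrable `[- pi, pi] (EFin \o h))
  (Hh_cont : {for 0, continuous h})
  (Hh_lb : exists2 c : R, 0 < c & forall x, x \in `[- pi, pi] -> c <= h x) :
  forall eps : R, 0 < eps ->
    exists t : R -> R, trig_poly t /\
      (forall x, x \in `[- pi, pi] ->
         0 <= t x <= fisher_hartwig h lam alpha x) /\
      fisher_hartwig h lam alpha 0 - eps <= t 0.
Proof.
move=> eps eps0.
pose P (x : R) := \prod_(j < r) `|x - lam j| `^ alpha j.
have P_ge0 : forall x, 0 <= P x by move=> x; apply: prodr_ge0 => j _; exact: powR_ge0.
have g_ge0 : forall x, x \in `[- pi, pi] -> 0 <= fisher_hartwig h lam alpha x.
  by move=> x xi; rewrite /fisher_hartwig mulr_ge0 ?Hh_nonneg //; exact: P_ge0.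
set g0 := fisher_hartwig h lam alpha 0.
have [Hg|Hg] := leP g0 eps.
  exists (fun _ => 0); split; first exact: tp_const.
  split; last by rewrite subr_le0.
  by move=> x xi; rewrite lexx g_ge0.
have Hlam0 : forall j, lam j = 0 -> alpha j = 0.
  move=> j lj; apply/eqP; apply: contraT => aj.
  have : g0 = 0.
    rewrite /g0 /fisher_hartwig (bigD1 j) //= lj subrr normr0 powR0 //.
    by rewrite mul0r mulr0.
  by move=> g00; move: Hg; rewrite g00 ltNge (ltW eps0).
pose m j := if alpha j == 0 then 0%N else (Num.truncn (alpha j)).+1.
have Hm : forall j, alpha j <= (m j)%:R.
  move=> j; rewrite /m; case: eqP => [->//|_].
  exact: ltW (truncnS_gt _).
pose q (x : R) := \prod_(j < r) Sf (lam j) x ^+ m j.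
have S_ge0 : forall l x, 0 <= Sf l x :> R.
  by move=> l x; rewrite /Sf divr_ge0 // subr_ge0 cos_le1.
have q_ge0 : forall x, 0 <= q x by move=> x; apply: prodr_ge0 => j _; rewrite exprn_ge0.
have q_le : forall x, q x <= P x.
  move=> x; apply: ler_prod => j _; rewrite exprn_ge0 //=.
  exact: key_bound.
have q0 : 0 < q 0.
  apply: prodr_gt0 => j _; rewrite /m; case: eqP => [_|aj]; first by rewrite expr0.
  apply: exprn_gt0; rewrite /Sf divr_gt0 // subr_gt0 sub0r cosN cos_lt1 //.
  by apply/eqP => /Hlam0.
have [c c0 Hc] := Hh_lb.
pose A := (g0 - eps) / q 0.
have A0 : 0 < A by rewrite divr_gt0 // subr_gt0.
pose F (x : R) := h x * P x - A * q x.
have Fc : F x @[x --> (0:R)] --> F 0.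
  rewrite /F; apply: cvgB; (apply: cvgM; first by [exact: Hh_cont | exact: cvg_cst]).
    rewrite /P; apply: cont_prod => j.
    have [lj|lj] := eqVneq (lam j) 0.
      rewrite (Hlam0 j lj); under eq_fun do rewrite powRr0.
      rewrite powRr0; exact: cvg_cst.
    exact: cont_pow_shift.
  rewrite /q; apply: cont_prod => j.
  apply: cont_exp; exact: cont_Sf.
have F0 : F 0 = eps.
  rewrite /F /A mulfVK ?gt_eqF // /g0 /fisher_hartwig /P; ring.
have [d d0 Hd] : exists2 d : R, 0 < d & forall x, `|x| < d -> 0 < F x.
  apply: near0; apply: (cvgr_gt (F 0) Fc); by rewrite F0.
pose d' := Order.min d pi.
have d'0 : 0 < d' by rewrite lt_min d0 pi_gt0.
pose kap := Kf d'.
have kap0 : 0 <= kap by rewrite /kap /Kf divr_ge0 // -lerBlDl sub0r cos_geN1.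
have kap1 : kap < 1.
  rewrite /kap /Kf ltr_pdivrMr // mul1r -ltrBrDl -[X in _ < X - 1]natr1 addrK.
  by rewrite cos_lt1 ?gt_eqF // in_setE /= in_itv /= ge_min lexx orbT andbT (le_trans _ (ltW d'0)) // oppr_le0 pi_ge0.
have [N _ HN] : \forall n \near \oo, kap ^+ n < c / A.
  have kk : `|kap| < 1 by rewrite ger0_norm.
  apply: (cvgr_lt 0 (cvg_expr kk)).
  by rewrite divr_gt0.
exists (fun x => A * (Kf x ^+ N * q x)).
split; first exact: tp_final.
split; last first.
  rewrite /Kf cos0 (_ : (1 + 1) / 2 = 1 :> R); last by field.
  by rewrite expr1n mul1r /A mulfVK ?gt_eqF.
move=> x xi.
have K0 : 0 <= Kf x by rewrite /Kf divr_ge0 // -lerBlDl sub0r cos_geN1.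
have K1 : Kf x <= 1 by rewrite /Kf ler_pdivrMr // mul1r -lerBrDl -[X in _ <= X - 1]natr1 addrK cos_le1.
apply/andP; split; first by rewrite mulr_ge0 ?(ltW A0) // mulr_ge0 ?exprn_ge0.
rewrite /fisher_hartwig -/(P x).
have [xd|xd] := ltP `|x| d.
  have := Hd x xd; rewrite /F subr_gt0 => H.
  apply: (le_trans _ (ltW H)); rewrite ler_wpM2l ?(ltW A0) //.
  by rewrite -[X in _ <= X]mul1r ler_wpM2r // exprn_ile1.
have xpi : `|x| <= pi by move: xi; rewrite in_setE /= in_itv /= ler_norml.
have Kk : Kf x <= kap.
  rewrite /kap /Kf ler_pM2r // lerD2l; apply: cos_le_far => //; first exact: ltW.
  by rewrite /d' ge_min xd.
have KN : Kf x ^+ N <= c / A.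
  apply: le_trans (ltW (HN N (leqnn N))).
  by apply: lerXn2r; rewrite ?nnegrE.
have hP : c * P x <= h x * P x by rewrite ler_wpM2r ?Hc.
apply: le_trans hP.
apply: (@le_trans _ _ (A * (c / A * q x))).
  by rewrite ler_wpM2l ?(ltW A0) // ler_wpM2r.
rewrite mulrA mulrCA divff ?gt_eqF // mulr1 ler_wpM2l ?(ltW c0) //.
Qed.
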